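(* Let $\mathbb{F}$ be any field. There exists a non-zero polynomial $Q \in \mathbb{F}[x_{1,1, 1}, \ldots, x_{n,n, n}]$ of degree at most $n^4$ such that $Q(\tau)=0$ for every three-dimensional tensor $\tau:[n]\times [n] \times [n] \to \mathbb{F}$ of rank at most $n^2/300$.
   Context: The rank of a tensor $\tau:[n]^3\to\mathbb{F}$ is the least $r$ such that $\tau=\sum_{i=1}^r u_i\otimes v_i\otimes w_i$ with $u_i,v_i,w_i\in\mathbb{F}^n$. $Q(\tau)$ denotes evaluation at $x_{i,j,k}=\tau(i,j,k)$. *)

(* Defs.v *)
From HB Require Import structures.
From mathcomp Require Import all_boot all_order all_algebra.
From mathcomp Require Import mpoly.
Set Implicit Arguments. Unset Strict Implicit. Unset Printing Implicit Defensive.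
Import GRing.Theory.
Local Open Scope ring_scope.

Definition idx3 (n : nat) : finType := ('I_n * 'I_n * 'I_n)%type.

Definition tensor3 (F : fieldType) (n : nat) := idx3 n -> F.

Definition rank_decomp (F : fieldType) (n r : nat) (tau : tensor3 F n) : Prop :=
  exists (u v w : 'I_r -> 'I_n -> F),
    forall i j k : 'I_n, tau (i, j, k) = \sum_(l < r) u l i * v l j * w l k.

(* rank tau <= s : the least r admitting a decomposition is at most s,
   i.e. some decomposition with at most s terms exists. *)
Definition tensor_rank_le (F : fieldType) (n : nat) (tau : tensor3 F n) (s : nat)
  : Prop := exists r : nat, (r <= s)%N /\ rank_decomp r tau.

(* Variables x_{i,j,k} are indexed by 'I_#|idx3 n| via enum_val;
   Q(tau) is evaluation at x_{i,j,k} := tau(i,j,k). *)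
Definition eval_tensor (F : fieldType) (n : nat)
  (Q : {mpoly F[#|idx3 n|]}) (tau : tensor3 F n) : F :=
  Q.@[fun c : 'I_#|idx3 n| => tau (enum_val c)].

(* Main.v *)
Require Import Defs.
From HB Require Import structures.
From mathcomp Require Import all_boot all_order all_algebra.
From mathcomp Require Import mpoly.
From mathcomp Require Import zify.
Set Implicit Arguments. Unset Strict Implicit. Unset Printing Implicit Defensive.
Import GRing.Theory.
Local Open Scope ring_scope.

Section H.
Variables (F : fieldType) (k : nat).
Implicit Types p q : {mpoly F[k]}.

Lemma msizeM_le' p q : (msize (p*q) <= (msize p + msize q).-1)%N.
Proof.
have [->|p0] := eqVneq p 0; first by rewrite mul0r msize0.
have [->|q0] := eqVneq q 0; first by rewrite mulr0 msize0.
by rewrite msizeM.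
Qed.

Lemma msize_bnd_mul p q a b : (msize p <= a.+1)%N -> (msize q <= b.+1)%N ->
  (msize (p*q) <= (a+b).+1)%N.
Proof.
move=> hp hq; apply: leq_trans (msizeM_le' p q) _.
rewrite -subn1 leq_subLR; lia.
Qed.

Lemma msize_bnd_exp p a e : (msize p <= a.+1)%N -> (msize (p ^+ e) <= (a*e).+1)%N.
Proof.
move=> h; elim: e => [|e IH]; first by rewrite expr0 msize1 muln0.
by rewrite exprS mulnS; apply: msize_bnd_mul.
Qed.

Lemma msize_bnd_prod (I : finType) (Fp : I -> {mpoly F[k]}) (a : I -> nat) :
  (forall i, msize (Fp i) <= (a i).+1)%N ->
  (msize (\prod_i Fp i) <= (\sum_i a i).+1)%N.
Proof.
move=> h.
apply: (big_rec2 (fun s p => msize p <= s.+1)%N); first by rewrite msize1.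
by move=> i s p _ hp; apply: msize_bnd_mul.
Qed.

Lemma msize_bnd_sum (I : Type) (r : seq I) (P : pred I) (Fp : I -> {mpoly F[k]}) B :
  (forall i, P i -> msize (Fp i) <= B)%N -> (msize (\sum_(i <- r | P i) Fp i) <= B)%N.
Proof.
move=> h; apply: (big_ind (fun p => msize p <= B)%N) => //.
  by rewrite msize0.
move=> p q hp hq; apply: leq_trans (mmeasureD_le _ _ _) _.
by rewrite geq_max hp hq.
Qed.

End H.

Definition RR n := (n ^ 2 %/ 300)%N.
Definition Tv n : finType :=
  ((('I_(RR n) * 'I_n) + ('I_(RR n) * 'I_n)) + ('I_(RR n) * 'I_n))%type.
Definition MM n := #|Tv n|.
Definition xu n (l : 'I_(RR n)) (i : 'I_n) : 'I_(MM n) := enum_rank (inl (inl (l,i)) : Tv n).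
Definition xv n (l : 'I_(RR n)) (i : 'I_n) : 'I_(MM n) := enum_rank (inl (inr (l,i)) : Tv n).
Definition xw n (l : 'I_(RR n)) (i : 'I_n) : 'I_(MM n) := enum_rank (inr (l,i) : Tv n).
Definition Pc (F : fieldType) n (c : 'I_#|idx3 n|) : {mpoly F[MM n]} :=
  let: (i,j,k) := (enum_val c : 'I_n * 'I_n * 'I_n) in
  \sum_(l < RR n) 'X_(xu l i) * 'X_(xv l j) * 'X_(xw l k).
Definition Ptup (F : fieldType) n : (#|idx3 n|).-tuple {mpoly F[MM n]} :=
  [tuple Pc F c | c < #|idx3 n|].
Notation Sx n := {ffun 'I_#|idx3 n| -> 'I_n.+1}.
Definition mon n (f : Sx n) : 'X_{1..#|idx3 n|} := [multinom (f i : nat) | i < #|idx3 n|].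
Notation Gx n := {ffun 'I_(MM n) -> 'I_(3 * n^4).+1}.
Definition mon' n (g : Gx n) : 'X_{1..MM n} := [multinom (g i : nat) | i < MM n].
Definition Amx (F : fieldType) n : 'M[F]_(#|Sx n|, #|Gx n|) :=
  \matrix_(a, b) (('X_[mon (enum_val a)] \mPo Ptup F n)@_(mon' (enum_val b))).

Lemma card_idx3 n : #|idx3 n| = (n * n * n)%N.
Proof. by rewrite /idx3 !card_prod !card_ord. Qed.

Lemma card_Tv n : MM n = (3 * RR n * n)%N.
Proof. rewrite /MM /Tv !card_sum !card_prod !card_ord; lia. Qed.

Lemma RR_le n : (RR n * 300 <= n ^ 2)%N.
Proof. exact: leq_divM. Qed.

Lemma base_ineq n : (0 < n)%N -> ((3 * n^4).+1 < n.+1 ^ 5)%N.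
Proof.
move=> hn; rewrite !expnS expn0 !muln1; nia.
Qed.

Lemma card_ineq n : (0 < n)%N -> (#|Gx n| < #|Sx n|)%N.
Proof.
move=> hn; rewrite !card_ffun !card_ord card_Tv card_idx3.
have h1 := base_ineq hn.
have h2 : (5 * (3 * RR n * n) < n * n * n)%N.
  have := RR_le n; rewrite expnS expn1 => h.
  have : (RR n * 300 * n <= n * n * n)%N by rewrite leq_mul2r h orbT.
  have [->|hr] := posnP (RR n); nia.
apply: leq_ltn_trans (_ : (n.+1 ^ (5 * (3 * RR n * n)) < _)%N); last first.
  by rewrite ltn_exp2l.
rewrite [X in (_ <= X)%N]expnM.
case: (posnP (3 * RR n * n)) => [->|hp]; first by rewrite !expn0.
by rewrite leq_exp2r // ltnW.
Qed.

Lemma msize_Pc (F : fieldType) n (c : 'I_#|idx3 n|) : (msize (Pc F c) <= 4)%N.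
Proof.
rewrite /Pc; case: (enum_val c) => [[i j] k].
apply: msize_bnd_sum => l _.
have hX : forall a : 'I_(MM n), (msize ('X_a : {mpoly F[MM n]}) <= 2)%N.
  by move=> a; rewrite msizeX mdeg1.
exact: (msize_bnd_mul (a := 2) (b := 1) (msize_bnd_mul (a := 1) (b := 1) (hX _) (hX _)) (hX _)).
Qed.

Lemma mon_sum n (f : Sx n) : (\sum_(i < #|idx3 n|) mon f i <= n ^ 4)%N.
Proof.
have h : forall i : 'I_#|idx3 n|, (mon f i <= n)%N.
  by move=> i; rewrite mnmE -ltnS.
apply: leq_trans (leq_sum _ (fun i _ => h i)) _.
by rewrite sum_nat_const card_ord card_idx3; lia.
Qed.

Lemma msize_comp (F : fieldType) n (f : Sx n) :
  (msize ('X_[mon f] \mPo Ptup F n) <= (3 * n^4).+1)%N.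
Proof.
rewrite comp_mpolyX.
apply: leq_trans (msize_bnd_prod (a := fun i => 3 * mon f i)%N _) _.
  by move=> i; apply: msize_bnd_exp; rewrite tnth_mktuple; exact: msize_Pc.
by rewrite ltnS -big_distrr /= leq_mul2l mon_sum orbT.
Qed.

Lemma mon_inj n : injective (@mon n).
Proof.
move=> f g /mnmP h; apply/ffunP => i; apply/val_inj.
by have := h i; rewrite !mnmE.
Qed.

Lemma ker_ex (F : fieldType) n : (0 < n)%N ->
  exists x : 'rV[F]_(#|Sx n|), x != 0 /\ x *m Amx F n = 0.
Proof.
move=> hn; set A := Amx F n.
have hk : kermx A != 0.
  rewrite -mxrank_eq0 mxrank_ker.
  have := rank_leq_col A; have := card_ineq hn; lia.
case: (pickP (fun i => row i (kermx A) != 0)) => [i hi | h].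
  by exists (row i (kermx A)); split => //; rewrite -row_mul mulmx_ker row0.
case/eqP: hk; apply/row_matrixP => i; rewrite row0.
by apply/eqP; move/negbFE: (h i).
Qed.

Theorem theorem4p2 (F : fieldType) (n : nat) (hn : (0 < n)%N) :
  exists Q : {mpoly F[#|idx3 n|]},
    Q != 0 /\
    (msize Q <= (n ^ 4).+1)%N /\
    forall (tau : tensor3 F n) (s : nat),
      (300 * s <= n ^ 2)%N -> tensor_rank_le tau s -> eval_tensor Q tau = 0.
Proof.
have [x [x0 hx]] := ker_ex F hn.
pose Q : {mpoly F[#|idx3 n|]} := \sum_(a < #|Sx n|) x 0 a *: 'X_[mon (enum_val a)].
have hQc : forall a, Q@_(mon (enum_val a)) = x 0 a.
  move=> a; rewrite raddf_sum (bigD1 a) //= mcoeffZ mcoeffX eqxx mulr1.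
  rewrite big1 ?addr0 // => b hb; rewrite mcoeffZ mcoeffX.
  by rewrite (inj_eq (@mon_inj n)) (inj_eq enum_val_inj) (negbTE hb) mulr0.
have QP0 : Q \mPo Ptup F n = 0.
  apply/mpolyP => m; rewrite mcoeff0.
  case: (leqP (mdeg m) (3 * n^4)) => hm.
    pose g : Gx n := [ffun i => inord (m i)].
    have -> : m = mon' g.
      apply/mnmP => i; rewrite mnmE ffunE inordK // ltnS (leq_trans _ hm) //.
      by rewrite mdegE (bigD1 i) //= leq_addr.
    have := congr1 (fun M : 'rV[F]_#|Gx n| => M 0 (enum_rank g)) hx.
    rewrite !mxE => <-.
    rewrite /Q (raddf_sum (comp_mpoly (Ptup F n))) raddf_sum; apply: eq_bigr => a _.
    rewrite /= linearZ /=.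
    by rewrite mcoeffZ /Amx !mxE enum_rankK.
  apply/eqP; rewrite mcoeff_eq0; apply: msize_mdeg_ge.
  apply: leq_trans hm; rewrite /Q (raddf_sum (comp_mpoly (Ptup F n))); apply: msize_bnd_sum => a _.
  by rewrite /= linearZ /=; apply: leq_trans (mmeasureZ_le _ _ _) (msize_comp _ _).
exists Q; split; [|split].
- have [a ha] : exists a, x 0 a != 0.
    apply/existsP; apply: contraR x0 => /existsPn h; apply/eqP/rowP => j.
    by rewrite mxE; move/negbNE/eqP: (h j).
  by apply: contra ha => /eqP Q0; rewrite -hQc Q0 mcoeff0.
- apply: msize_bnd_sum => a _; apply: leq_trans (mmeasureZ_le _ _ _) _.
  by rewrite msizeX ltnS mdegE mon_sum.
move=> tau s hs [r [hr [u [v [w htau]]]]].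
have hrR : (r <= RR n)%N by rewrite /RR leq_divRL //; lia.
pose ext (f : 'I_r -> 'I_n -> F) (l : 'I_(RR n)) i :=
  if insub (val l) is Some l' then f l' i else 0.
pose z : 'I_(MM n) -> F := fun c =>
  match (enum_val c : Tv n) with
  | inl (inl (l, i)) => ext u l i
  | inl (inr (l, i)) => ext v l i
  | inr (l, i) => ext w l i
  end.
rewrite /eval_tensor.
transitivity (Q.@[fun c => (tnth (Ptup F n) c).@[z]]).
  apply: meval_eq => c; rewrite tnth_mktuple /Pc.
  case: (enum_val c) => [[i j] k].
  rewrite htau raddf_sum /=.
  under [RHS]eq_bigr do rewrite !mevalM !mevalXU /z /xu /xv /xw !enum_rankK /=.
  rewrite [RHS](bigID (fun l : 'I_(RR n) => (l < r)%N)) /=.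
  rewrite [X in _ = _ + X]big1 ?addr0; last first.
    by move=> l hl; rewrite /ext insubN ?mul0r.
  rewrite (big_ord_narrow hrR); apply: eq_bigr => l _.
  by rewrite /ext /= valK.
by rewrite -comp_mpoly_meval QP0 meval0.
Qed.
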